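(* Let $A \subset \mathbb{Z}$ be a finite set with $\min A = 0$, $\max A = b$, and $\gcd A = 1$. For $v \in \{0, b\}$ let $T_v(A) = \bigcup_{h \geq 0} h(A - v)$ and $\sigma_v(x) = \sum_{a \in T_v(A)} x^a$. Then both $\sigma_0(x)$ and $\sigma_b(x)$ are rational functions of $x$, and for all integers $h \geq 0$ with $h \geq 2b - 4$, \[ \sigma_{hA}(x) = \sigma_0(x) + x^{hb}\,\sigma_b(x), \] where $\sigma_{hA}(x) = \sum_{a \in hA} x^a$.
   Context: For a finite set $B \subset \mathbb{Z}$ and integer $h \geq 0$, $hB = \{b_1 + \cdots + b_h : b_i \in B\}$, with $0B = \{0\}$, and $A - v = \{a - v : a \in A\}$. Note $T_0(A) \subseteq \mathbb{N}$ so $\sigma_0$ is a formal power series in $x$, while $T_b(A) \subseteq -\mathbb{N}$ so $\sigma_b$ is a formal power series in $x^{-1}$; ''rational function'' means these series are expansions of rational functions in $x$, and the displayed identity is an identity of rational functions. Here $\mathbb{N} = \{0,1,2,\ldots\}$. *)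

(* Defs.v *)
From HB Require Import structures.
From mathcomp Require Import all_boot all_order all_algebra.
From Stdlib Require Import ClassicalEpsilon.
Set Implicit Arguments. Unset Strict Implicit. Unset Printing Implicit Defensive.
Import Order.TTheory GRing.Theory Num.Theory.
Local Open Scope ring_scope.

(* A finite set of integers is represented by a list (duplicates irrelevant). *)

Definition gcd_set (A : seq int) : int := \big[gcdz/0]_(a <- A) a.

Definition shift_set (A : seq int) (v : int) : seq int := [seq a - v | a <- A].

Fixpoint sumset (B : seq int) (h : nat) : seq int :=
  match h with
  | 0 => [:: 0]
  | h'.+1 => [seq a + s | a <- B, s <- sumset B h']
  end.

Definition inT (A : seq int) (v : int) (n : int) : Prop :=
  exists h : nat, n \in sumset (shift_set A v) h.

Definition ind (P : Prop) : rat :=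
  if excluded_middle_informative P then 1 else 0.

(* The formal power series with coefficients c (c n = coefficient of y^n)
   is the expansion of the rational function p/q, i.e. q(0) <> 0 and
   q * (sum c n y^n) = p as formal power series. *)
Definition expands (c : nat -> rat) (p q : {poly rat}) : Prop :=
  q`_0 != 0 /\
  forall n : nat, \sum_(i < n.+1) q`_i * c (n - i)%N = p`_n.

Definition RF := {fraction {poly rat}}.
Definition xRF : RF := tofrac 'X.

Definition eval_inv (p : {poly rat}) : RF :=
  \sum_(i < size p) tofrac (p`_i)%:P * xRF ^- i.

Definition sigma_sumset (A : seq int) (h : nat) : RF :=
  \sum_(a <- undup (sumset A h)) xRF ^ a.

(* Main.v *)
Require Import Defs.
From HB Require Import structures.
From mathcomp Require Import all_boot all_order all_algebra.
From mathcomp Require Import zify ring.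
From Stdlib Require Import ClassicalEpsilon.
Import Order.TTheory GRing.Theory Num.Theory.
Local Open Scope ring_scope.

Lemma sumset_add (B : seq int) j k x y :
  x \in sumset B j -> y \in sumset B k -> x + y \in sumset B (j + k)%N.
Proof.
elim: j x => [|j IH] x /=.
  by rewrite inE => /eqP -> Hy; rewrite add0r.
move=> /allpairsP [[a s] [/= Ha Hs ->]] Hy.
rewrite -addrA; apply: allpairs_f => //; exact: IH.
Qed.

Lemma sumset1 (B : seq int) a : a \in B -> a \in sumset B 1.
Proof. move=> Ha; rewrite -[X in X \in _]addr0; exact: (allpairs_f (fun x y => x + y) Ha (mem_head 0 [::])). Qed.

Lemma sumset_mono (B : seq int) j k x : 0 \in B -> (j <= k)%N ->
  x \in sumset B j -> x \in sumset B k.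
Proof.
move=> B0 /subnKC <-; move: (k - j)%N => m Hx.
rewrite addnC -[x]add0r; apply: sumset_add => //.
elim: m => [|m IH] /=; first by rewrite inE.
by rewrite -[0]addr0; apply: allpairs_f.
Qed.

Lemma sumset_mulb (B : seq int) (b : int) u : b \in B -> (u%:Z * b) \in sumset B u.
Proof.
move=> Hb; elim: u => [|u IH] /=; first by rewrite mul0r inE.
rewrite intS mulrDl mul1r; exact: allpairs_f.
Qed.

Lemma sumset_bounds (B : seq int) (b : int) k x :
  (forall a, a \in B -> 0 <= a <= b) -> x \in sumset B k -> 0 <= x <= k%:Z * b.
Proof.
move=> HB; elim: k x => [|k IH] x /=; first by rewrite inE => /eqP ->; rewrite mul0r lexx.
move=> /allpairsP [[a s] [/= Ha Hs ->]].
move: (HB a Ha) (IH s Hs) => /andP[h1 h2] /andP[h3 h4].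
rewrite intS mulrDl mul1r; apply/andP; split; lia.
Qed.

Lemma sumset_rev (B : seq int) (b : int) k x :
  x \in sumset B k -> k%:Z * b - x \in sumset [seq b - a | a <- B] k.
Proof.
elim: k x => [|k IH] x /=; first by rewrite inE => /eqP ->; rewrite mul0r subr0 inE.
move=> /allpairsP [[a s] [/= Ha Hs ->]].
have -> : (k.+1)%:Z * b - (a + s) = (b - a) + (k%:Z * b - s) by rewrite intS; ring.
apply: allpairs_f; [exact: map_f | exact: IH].
Qed.

Lemma sumset_list (B : seq int) (t : seq int) :
  {subset t <= B} -> \sum_(x <- t) x \in sumset B (size t).
Proof.
elim: t => [|a t IH] Ht /=; first by rewrite big_nil inE.
rewrite big_cons; apply: allpairs_f; first by apply: Ht; rewrite inE eqxx.
by apply: IH => y Hy; apply: Ht; rewrite inE Hy orbT.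
Qed.

Lemma pigeon (t : seq int) (b : nat) : (0 < b)%N -> (b <= size t)%N ->
  exists i j, [/\ (i < j)%N, (j <= b)%N &
    (b%:Z %| \sum_(x <- take j t) x - \sum_(x <- take i t) x)%Z].
Proof.
move=> b0 bt.
pose f i := absz ((\sum_(x <- take i t) x) %% b%:Z)%Z.
have bn0 : b%:Z != 0 by lia.
have fb i : (f i < b)%N.
  have := ltz_mod (\sum_(x <- take i t) x) bn0.
  have := modz_ge0 (\sum_(x <- take i t) x) bn0.
  rewrite /f; lia.
have : ~~ uniq (map f (iota 0 b.+1)).
  apply/negP => U.
  have : (size (map f (iota 0 b.+1)) <= size (iota 0 b))%N.
    apply: (uniq_leq_size U) => y /mapP [i _ ->]; rewrite mem_iota /= add0n; exact: fb.
  by rewrite size_map !size_iota ltnn.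
case/(uniqPn 0) => i [j [ij]]; rewrite size_map size_iota => jlt.
rewrite !(nth_map 0) ?size_iota ?nth_iota //; last by apply: ltn_trans jlt.
rewrite !add0n /f => E.
exists i, j; split => //.
rewrite -eqz_mod_dvd; apply/eqP.
have h1 := modz_ge0 (\sum_(x <- take i t) x) bn0.
have h2 := modz_ge0 (\sum_(x <- take j t) x) bn0.
move: E h1 h2.
set X := ((\sum_(x <- take i t) x) %% b%:Z)%Z.
set Y := ((\sum_(x <- take j t) x) %% b%:Z)%Z.
lia.
exact: ltn_trans jlt.
Qed.

Definition good (B : seq int) (b : nat) (x : int) := (x \in B) && (0 < x < b%:Z).

Lemma reduce (B : seq int) (b : nat) (t : seq int) : (0 < b)%N ->
  (forall x, x \in t -> good B b x) ->
  exists (u : nat) (t' : seq int), [/\ (size t' < b)%N,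
    (forall x, x \in t' -> good B b x) &
    \sum_(x <- t) x = u%:Z * b%:Z + \sum_(x <- t') x].
Proof.
move=> b0; move: {2}(size t) (leqnn (size t)) => n.
elim: n t => [|n IH] t Hs Ht.
  by exists 0%N, t; split; rewrite ?mul0r ?add0r //; lia.
have [small|big] := ltnP (size t) b.
  by exists 0%N, t; split; rewrite ?mul0r ?add0r.
have [i [j [ij jb dv]]] := @pigeon t b b0 big.
pose t1 := take i t ++ drop j t.
have Hs1 : (size t1 <= n)%N.
  rewrite /t1 size_cat size_drop size_takel; lia.
have Ht1 : forall x, x \in t1 -> good B b x.
  move=> x; rewrite mem_cat => /orP[/mem_take|/mem_drop]; exact: Ht.
have [u1 [t' [st' Ht' E1]]] := IH t1 Hs1 Ht1.
have Etj : \sum_(x <- take j t) x = \sum_(x <- take i t) x + \sum_(x <- drop i (take j t)) x.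
  by rewrite -big_cat /= -{1}(cat_take_drop i (take j t)) take_takel // ltnW.
have Et : \sum_(x <- t) x = \sum_(x <- take j t) x + \sum_(x <- drop j t) x.
  by rewrite -big_cat /= cat_take_drop.
have Et1 : \sum_(x <- t1) x = \sum_(x <- take i t) x + \sum_(x <- drop j t) x.
  by rewrite /t1 big_cat.
set d := \sum_(x <- take j t) x - \sum_(x <- take i t) x in dv.
have d0 : 0 <= d.
  rewrite /d Etj addrC addKr big_seq; apply: sumr_ge0 => x /mem_drop /mem_take /Ht.
  by rewrite /good => /andP[_ /andP[/ltW]].
have q0 : 0 <= (d %/ b%:Z)%Z by rewrite divz_ge0 //; lia.
exists (u1 + absz (d %/ b%:Z)%Z)%N, t'; split => //.
have Ed : d = (d %/ b%:Z)%Z * b%:Z by rewrite (divzK dv).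
set q := (d %/ b%:Z)%Z in Ed q0 *.
have -> : \sum_(x <- t) x = \sum_(x <- t1) x + d by rewrite /d Et Et1; ring.
rewrite E1 PoszD gez0_abs // Ed; ring.
Qed.

Definition inS (B : seq int) (n : int) := exists k, n \in sumset B k.

Definition hypB (B : seq int) (b : nat) :=
  [/\ 0 \in B, b%:Z \in B, (forall a, a \in B -> 0 <= a <= b%:Z) & (0 < b)%N].

Lemma coreR B b k n : hypB B b -> n \in sumset B k ->
  exists (u : nat) (t : seq int), [/\ (size t < b)%N,
    (forall x, x \in t -> good B b x) & n = u%:Z * b%:Z + \sum_(x <- t) x].
Proof.
case=> B0 Bb Bab b0.
elim: k n => [|k IH] n /=.
  by rewrite inE => /eqP ->; exists 0%N, [::]; split; rewrite ?big_nil ?mul0r ?addr0.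
move=> /allpairsP [[a s] [/= Ha Hs ->]].
have [u [t [st Ht Es]]] := IH s Hs.
have [->|a0] := eqVneq a 0.
  by exists u, t; split; rewrite ?add0r.
have [->|ab] := eqVneq a b%:Z.
  by exists u.+1, t; split; rewrite // Es intS; ring.
have ga : good B b a.
  by rewrite /good Ha /=; move: (Bab a Ha) a0 ab; lia.
have Hat : forall x, x \in a :: t -> good B b x.
  by move=> x; rewrite inE => /orP[/eqP->|/Ht].
have [u' [t' [st' Ht' E']]] := @reduce B b (a :: t) b0 Hat.
exists (u + u')%N, t'; split => //.
move: E'; rewrite big_cons Es PoszD => E'.
have -> : a + (u%:Z * b%:Z + \sum_(x <- t) x) = u%:Z * b%:Z + (a + \sum_(x <- t) x) by ring.
rewrite E'; ring.
Qed.

Lemma gsb_aux (n : nat) (a S P : int) (b : nat) :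
  0 < a < b%:Z -> n%:Z <= S <= P -> (1 + n%:Z) <= a + S <= (b%:Z - 1 + P).
Proof. lia. Qed.

Lemma good_sum_bounds B b t : (forall x, x \in t -> good B b x) ->
  (size t)%:Z <= \sum_(x <- t) x <= (size t)%:Z * (b%:Z - 1).
Proof.
elim: t => [|a t IH] Ht; first by rewrite big_nil mul0r lexx.
rewrite big_cons /=.
have := IH (fun x hx => Ht x (mem_behead (s := a :: t) hx)).
have := Ht a (mem_head _ _); rewrite /good => /andP[_ ha].
rewrite intS mulrDl mul1r; exact: gsb_aux.
Qed.

Lemma good_sumset B b t : (forall x, x \in t -> good B b x) ->
  \sum_(x <- t) x \in sumset B (size t).
Proof. by move=> Ht; apply: sumset_list => x /Ht /andP[]. Qed.

Lemma coreR2 B b k n : hypB B b -> n \in sumset B k ->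
  exists (u r : nat) (y : int), [/\ (r < b)%N, r%:Z <= y <= r%:Z * (b%:Z - 1),
    n = u%:Z * b%:Z + y, y \in sumset B r & n \in sumset B (u + r)].
Proof.
move=> hB Hn; have [u [t [st Ht E]]] := @coreR B b k n hB Hn.
exists u, (size t), (\sum_(x <- t) x); split => //.
- exact: good_sum_bounds Ht.
- exact: good_sumset Ht.
rewrite E; apply: sumset_add; last exact: good_sumset Ht.
by case: hB => _ Bb _ _; apply: sumset_mulb.
Qed.

Lemma inS_add B x y : inS B x -> inS B y -> inS B (x + y).
Proof. by move=> [j Hx] [k Hy]; exists (j + k)%N; apply: sumset_add. Qed.

Lemma inS_0 B : inS B 0.
Proof. by exists 0%N; rewrite inE. Qed.

Lemma inS_mem B a : a \in B -> inS B a.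
Proof. by move=> Ha; exists 1%N; apply: sumset1. Qed.

Lemma inS_muln B (k : nat) x : inS B x -> inS B (k%:Z * x).
Proof.
move=> Hx; elim: k => [|k IH]; first by rewrite mul0r; apply: inS_0.
by rewrite intS mulrDl mul1r; apply: inS_add.
Qed.

Lemma gcd_set_cons a L : gcd_set (a :: L) = gcdz a (gcd_set L).
Proof. by rewrite /gcd_set big_cons. Qed.

Lemma residue B b L : hypB B b -> {subset L <= B} ->
  exists s, inS B s /\ (b%:Z %| s - gcd_set L)%Z.
Proof.
move=> hB; case: (hB) => _ _ _ b0.
elim: L => [|a L IH] HL.
  by exists 0; split; [apply: inS_0 | rewrite /gcd_set big_nil subr0 dvdz0].
have [s [Ss ds]] := IH (fun x hx => HL x (mem_behead (s := a :: L) hx)).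
have Ha : a \in B by apply: HL; rewrite mem_head.
have [u [v Euv]] := Bezoutz a (gcd_set L).
have bn0 : b%:Z != 0 by lia.
pose u' := absz (u %% b%:Z)%Z. pose v' := absz (v %% b%:Z)%Z.
have Eu : u'%:Z = u - (u %/ b%:Z)%Z * b%:Z.
  by rewrite /u' gez0_abs ?modz_ge0 // {2}(divz_eq u b%:Z); ring.
have Ev : v'%:Z = v - (v %/ b%:Z)%Z * b%:Z.
  by rewrite /v' gez0_abs ?modz_ge0 // {2}(divz_eq v b%:Z); ring.
have Ew : s - gcd_set L = ((s - gcd_set L) %/ b%:Z)%Z * b%:Z by rewrite divzK.
exists (u'%:Z * a + v'%:Z * s); split.
  by apply: inS_add; apply: inS_muln => //; apply: inS_mem.
rewrite gcd_set_cons -Euv Eu Ev.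
set U := (u %/ b%:Z)%Z in Eu *; set V := (v %/ b%:Z)%Z in Ev *.
set W := ((s - gcd_set L) %/ b%:Z)%Z in Ew.
have -> : (u - U * b%:Z) * a + (v - V * b%:Z) * s - (u * a + v * gcd_set L)
   = (- U * a - V * s) * b%:Z + v * (s - gcd_set L) by ring.
rewrite Ew.
have -> : (- U * a - V * s) * b%:Z + v * (W * b%:Z) = ((- U * a - V * s) + v * W) * b%:Z by ring.
exact: dvdz_mull (dvdzz _).
Qed.

Lemma nn_aux (b : nat) (n : int) : (0 < b)%N -> (b%:Z - 1) * (b%:Z - 2) <= n -> 0 <= n.
Proof.
case: b => [|[|b]] //= _ H; apply: le_trans H; first lia.
Qed.

Lemma frob_aux (b r : nat) (n y j : int) : (0 < b)%N -> (r < b)%N -> j < 0 ->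
  n - y = j * b%:Z -> y <= r%:Z * (b%:Z - 1) -> (b%:Z - 1) * (b%:Z - 2) <= n -> False.
Proof.
move=> b0 rb jn E yb Hn.
have h1 : j * b%:Z <= - b%:Z by nia.
have h2 : r%:Z * (b%:Z - 1) <= (b%:Z - 1) * (b%:Z - 1) by nia.
nia.
Qed.

Lemma frob B b n : hypB B b -> gcd_set B = 1 ->
  (b%:Z - 1) * (b%:Z - 2) <= n -> inS B n.
Proof.
move=> hB g1 Hn; case: (hB) => B0 Bb Bab b0.
have [s [[k Sk] ds]] := @residue B b B hB (fun x (hx : x \in B) => hx).
rewrite g1 in ds.
have n0 : 0 <= n by exact: nn_aux Hn.
have Sns : (absz n)%:Z * s \in sumset B (k * absz n)%N.
  elim: (absz n) => [|m IH]; first by rewrite mul0r muln0 inE.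
  by rewrite intS mulrDl mul1r mulnS; apply: sumset_add.
rewrite gez0_abs // in Sns.
have [u [r [y [rb ybd Ey Sy _]]]] := @coreR2 B b _ _ hB Sns.
have bn0 : b%:Z != 0 by lia.
have Es1 : s - 1 = ((s - 1) %/ b%:Z)%Z * b%:Z by rewrite divzK.
set j := ((n - y) %/ b%:Z)%Z.
have dny : (b%:Z %| n - y)%Z.
  set q := ((s - 1) %/ b%:Z)%Z in Es1.
  have Ey' : y = n * s - u%:Z * b%:Z by rewrite Ey; ring.
  have Es : s = q * b%:Z + 1 by rewrite -Es1; ring.
  have -> : n - y = (u%:Z - n * q) * b%:Z by rewrite Ey' Es; ring.
  exact: dvdz_mull (dvdzz _).
have Ej : n - y = j * b%:Z by rewrite divzK.
have [j0|jn] := leP 0 j.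
  have -> : n = (absz j)%:Z * b%:Z + y by rewrite gez0_abs //; rewrite -Ej; ring.
  by exists (absz j + r)%N; apply: sumset_add => //; apply: sumset_mulb.
case/andP: ybd => _ ybd.
by case: (@frob_aux b r n y j b0 rb jn Ej ybd Hn).
Qed.

Definition revA (A : seq int) (b : nat) := [seq b%:Z - a | a <- A].

Lemma revA_inv A b : revA (revA A b) b = A.
Proof.
rewrite /revA -map_comp -[RHS]map_id; apply: eq_map => a /=; ring.
Qed.

Lemma dvd_gcd_set d L : (d %| gcd_set L)%Z = all (fun a => d %| a)%Z L.
Proof.
elim: L => [|a L IH]; first by rewrite /gcd_set big_nil dvdz0.
by rewrite gcd_set_cons dvdz_gcd IH.
Qed.

Lemma gcd_set_ge0 L : 0 <= gcd_set L.
Proof. by case: L => [|a L]; rewrite ?gcd_set_cons /gcd_set ?big_nil. Qed.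

Lemma hyp_b0 A (b : nat) : (forall a, a \in A -> 0 <= a) ->
  (forall a, a \in A -> a <= b%:Z) -> gcd_set A = 1 -> (0 < b)%N.
Proof.
case: b => // H1 H2 g1.
have : (0 %| gcd_set A)%Z.
  rewrite dvd_gcd_set; apply/allP => a Ha.
  have -> : a = 0 by apply/eqP; rewrite eq_le H2 // H1.
  exact: dvdz0.
by rewrite g1.
Qed.

Lemma hypB_rev A b : hypB A b -> hypB (revA A b) b.
Proof.
case=> A0 Ab Abd b0; split => //.
- by apply/mapP; exists b%:Z => //; rewrite subrr.
- by apply/mapP; exists 0 => //; rewrite subr0.
- by move=> x /mapP [a Ha ->]; move: (Abd a Ha); lia.
Qed.

Lemma gcd_rev A b : hypB A b -> gcd_set A = 1 -> gcd_set (revA A b) = 1.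
Proof.
case=> A0 Ab Abd b0 g1.
set g := gcd_set (revA A b).
have hall : all (fun a => g %| a)%Z (revA A b) by rewrite -dvd_gcd_set dvdzz.
have hb : (g %| b%:Z)%Z.
  have : (g %| b%:Z - 0)%Z by move/allP: hall; apply; apply: map_f.
  by rewrite subr0.
have : (g %| gcd_set A)%Z.
  rewrite dvd_gcd_set; apply/allP => a Ha.
  have h1 : (g %| b%:Z - a)%Z by move/allP: hall; apply; apply: map_f.
  have -> : a = b%:Z - (b%:Z - a) by ring.
  exact: rpredB.
rewrite g1 dvdz1 => /eqP.
have := gcd_set_ge0 (revA A b); rewrite -/g; lia.
Qed.

Lemma sumset_opp B k x : (x \in sumset [seq - a | a <- B] k) = (- x \in sumset B k).
Proof.
elim: k x => [|k IH] x /=; first by rewrite !inE oppr_eq0.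
apply/allpairsP/allpairsP => [[[a s] [/= /mapP [a' Ha' ->] Hs ->]]|[[a s] [/= Ha Hs E]]].
  exists (a', - s); split => //=; first by rewrite -IH.
  by rewrite opprD opprK.
exists (- a, - s); split => //=.
- exact: map_f.
- by rewrite IH opprK.
- by rewrite -[x]opprK E opprD.
Qed.

Lemma inT0 A (n : int) : inT A 0 n <-> inS A n.
Proof.
rewrite /inT; have -> : shift_set A 0 = A.
  by rewrite /shift_set -[RHS]map_id; apply: eq_map => a /=; rewrite subr0.
by [].
Qed.

Lemma inTb A (b : nat) (m : int) : inT A b%:Z (- m) <-> inS (revA A b) m.
Proof.
have -> : revA A b = [seq - a | a <- shift_set A b%:Z].
  by rewrite /revA /shift_set -map_comp; apply: eq_map => a /=; rewrite opprB.
split => [[k Hk]|[k Hk]]; exists k.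
  by rewrite sumset_opp.
by rewrite sumset_opp in Hk.
Qed.

Lemma contra_aux (b h u r v s : nat) (y z n : int) : (0 < b)%N ->
  (r < b)%N -> (s < b)%N -> r%:Z <= y -> s%:Z <= z ->
  n = u%:Z * b%:Z + y -> h%:Z * b%:Z - n = v%:Z * b%:Z + z ->
  (h < u + r)%N -> (h < v + s)%N -> 2 * b%:Z - 4 <= h%:Z -> False.
Proof.
move=> b0 rb sb ry sz En Ez hu hv hb.
have h1 : (u%:Z + v%:Z - (2 * h%:Z + 2 - r%:Z - s%:Z)) * b%:Z >= 0 by apply: mulr_ge0; lia.
have h2 : (h%:Z + 2 - r%:Z - s%:Z) * b%:Z >= 0 by apply: mulr_ge0; lia.
have h3 : h%:Z * b%:Z >= 0 by apply: mulr_ge0; lia.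
nia.
Qed.

Lemma aux3 (b h n : nat) : (0 < b)%N -> 2 * b%:Z - 4 <= h%:Z -> (n <= h * b)%N ->
  n%:Z < (b%:Z - 1) * (b%:Z - 2) -> (b%:Z - 1) * (b%:Z - 2) <= h%:Z * b%:Z - n%:Z.
Proof.
case: b => [|[|[|b]]] //= _ hh nh Hn; try lia.
have h1 : (h%:Z - (2 * (b.+3)%:Z - 4)) * (b.+3)%:Z >= 0 by apply: mulr_ge0; lia.
nia.
Qed.

Lemma aux5 (b h : nat) : (0 < b)%N -> 2 * b%:Z - 4 <= h%:Z ->
  (b%:Z - 1) * (b%:Z - 2) <= h%:Z * b%:Z + 1.
Proof.
case: b => [|[|[|b]]] //= _ hh; try lia.
have h1 : (h%:Z - (2 * (b.+3)%:Z - 4)) * (b.+3)%:Z >= 0 by apply: mulr_ge0; lia.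
nia.
Qed.


Lemma M1 (A : seq int) (b h : nat) (n : int) : n \in sumset A h -> inS A n /\ inS (revA A b) (h%:Z * b%:Z - n).
Proof. by move=> Hn; split; exists h => //; apply: sumset_rev. Qed.

Lemma M2 (A : seq int) (b h : nat) (hA : hypB A b) (hh : 2 * b%:Z - 4 <= h%:Z) (n : int) : inS A n -> inS (revA A b) (h%:Z * b%:Z - n) -> n \in sumset A h.
Proof.
move=> [k Hk] [k' Hk'].
have hA' := @hypB_rev A b hA.
case: (hA) => A0 _ _ b0.
have [u [r [y [rb /andP[ry _] Ey _ Sn]]]] := @coreR2 A b _ _ hA Hk.
have [v [s [z [sb /andP[sz _] Ez _ Sn']]]] := @coreR2 (revA A b) b _ _ hA' Hk'.
have [hu|hu] := leqP (u + r) h; first exact: (@sumset_mono A (u + r) h n A0 hu Sn).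
have [hv|hv] := leqP (v + s) h.
  have A0' : 0 \in revA A b by case: hA'.
  have := @sumset_rev (revA A b) b%:Z h _ (@sumset_mono (revA A b) (v + s) h _ A0' hv Sn').
  change (h%:Z * b%:Z - (h%:Z * b%:Z - n) \in sumset (revA (revA A b) b) h -> n \in sumset A h).
  by rewrite revA_inv opprB addrC subrK.
by case: (@contra_aux b h u r v s y z n b0 rb sb ry sz Ey Ez hu hv hh).
Qed.

Lemma M3 (A : seq int) (b h : nat) (hA : hypB A b) (g1 : gcd_set A = 1) (hh : 2 * b%:Z - 4 <= h%:Z) (n : nat) : (n <= h * b)%N -> inS A n%:Z \/ inS (revA A b) (h%:Z * b%:Z - n%:Z).
Proof.
move=> nh; case: (hA) => _ _ _ b0.
have [Hn|Hn] := leP ((b%:Z - 1) * (b%:Z - 2)) n%:Z.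
  by left; apply: (@frob A b _ hA g1 Hn).
right; apply: (@frob (revA A b) b _ (@hypB_rev A b hA) (@gcd_rev A b hA g1)).
exact: (@aux3 b h n b0 hh nh Hn).
Qed.

Lemma cb_in (A : seq int) (b : nat) (hA : hypB A b) (g1 : gcd_set A = 1) (n : int) : (b%:Z - 1) * (b%:Z - 2) <= n -> inS A n /\ inS (revA A b) n.
Proof.
move=> Hn; split; first exact: (@frob A b _ hA g1 Hn).
exact: (@frob (revA A b) b _ (@hypB_rev A b hA) (@gcd_rev A b hA g1)).
Qed.



Definition phi (r : rat) : RF := tofrac (r%:P).

Lemma phiB r s : phi (r - s) = phi r - phi s.
Proof. by rewrite /phi polyCB tofracB. Qed.
Lemma phi1 : phi 1 = 1.
Proof. by rewrite /phi tofrac1. Qed.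
Lemma phi0 : phi 0 = 0.
Proof. by rewrite /phi tofrac0. Qed.
Lemma phiN r : phi (- r) = - phi r.
Proof. by rewrite /phi polyCN tofracN. Qed.

Definition pol (N : nat) (c : nat -> rat) : {poly rat} :=
  \poly_(i < N.+1) (c i - (if i is i'.+1 then c i' else 0)).
Definition qpol : {poly rat} := \poly_(i < 2) (if i == 0%N then 1 else -1 : rat).

Lemma expands_pol N c : (forall n, (N <= n)%N -> c n = 1) -> expands c (pol N c) qpol.
Proof.
move=> Hc; split; first by rewrite /qpol coef_poly.
move=> n; rewrite big_ord_recl /qpol /pol coef_poly /= subn0.
case: n => [|n].
  by rewrite big_ord0 coef_poly /=; ring.
rewrite big_ord_recl big1; last first.
  move=> i _; rewrite coef_poly lift0 /bump leq0n add1n ltnS ltnS ltn0.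
  by rewrite mul0r.
rewrite !coef_poly /= subSS subn0.
case: ltnP => Hn; first ring.
have h1 : c n.+1 = 1 by apply: Hc; exact: ltnW.
have h2 : c n = 1 by apply: Hc.
by rewrite h1 h2; ring.
Qed.

Lemma sum_extend (p : {poly rat}) (K : nat) (F : nat -> RF) :
  (size p <= K)%N ->
  \sum_(i < K) phi p`_i * F i = \sum_(i < size p) phi p`_i * F i.
Proof.
move=> HK; rewrite -(subnKC HK) big_split_ord /= [X in _ + X]big1 ?addr0 // => i _.
by rewrite nth_default ?leq_addr // phi0 mul0r.
Qed.

Lemma tofrac_sum (p : {poly rat}) K : (size p <= K)%N ->
  tofrac p = \sum_(i < K) phi p`_i * xRF ^+ i.
Proof.
move=> HK; rewrite sum_extend //.
rewrite -{1}[p]coefK poly_def rmorph_sum /=; apply: eq_bigr => i _.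
by rewrite -mul_polyC tofracM tofracXn.
Qed.

Lemma eval_inv_sum (p : {poly rat}) K : (size p <= K)%N ->
  eval_inv p = \sum_(i < K) phi p`_i * xRF^-1 ^+ i.
Proof.
move=> HK; rewrite sum_extend // /eval_inv; apply: eq_bigr => i _.
by rewrite exprVn.
Qed.

Lemma pol_eval N c M (y : RF) : (forall n, (N <= n)%N -> c n = 1) -> (N <= M)%N ->
  \sum_(i < M.+1) phi (pol N c)`_i * y ^+ i =
  (1 - y) * \sum_(i < M) phi (c i) * y ^+ i + y ^+ M.
Proof.
move=> Hc NM.
have Ec i : (i < M.+1)%N -> (pol N c)`_i = c i - (if i is i'.+1 then c i' else 0).
  move=> iM; rewrite coef_poly; case: ltnP => // Ni.
  by case: i iM Ni => [|i] iM Ni; rewrite !Hc ?subrr // ltnW.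
rewrite (eq_bigr (fun i : 'I_M.+1 => phi (c i) * y ^+ i - phi (if (i : nat) is i'.+1 then c i' else 0) * y ^+ i)); last first.
  by move=> i _; rewrite Ec // phiB mulrBl.
rewrite sumrB big_ord_recr /= big_ord_recl /= phi0 mul0r add0r Hc //.
rewrite phi1 mul1r mulrBl mul1r big_distrr /=.
have -> : \sum_(i < M) phi (c (bump 0 i).-1) * y ^+ bump 0 i = \sum_(i < M) y * (phi (c i) * y ^+ i).
  by apply: eq_bigr => i _; rewrite /bump /= add1n exprS; ring.
ring.
Qed.

Lemma qpol_eval (y : RF) : \sum_(i < 2) phi qpol`_i * y ^+ i = 1 - y.
Proof.
by rewrite !big_ord_recl big_ord0 !coef_poly /= phi1 phiN phi1 expr0 expr1; ring.
Qed.


Lemma undup_sum (L : seq int) (M : nat) (F : int -> RF) :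
  (forall a, a \in L -> 0 <= a < M%:Z) ->
  \sum_(a <- undup L) F a = \sum_(n < M) (if n%:Z \in L then F n%:Z else 0).
Proof.
move=> HL.
rewrite -(big_mkord xpredT (fun n => if n%:Z \in L then F n%:Z else 0)) /index_iota subn0.
rewrite -(big_map Posz xpredT (fun z => if z \in L then F z else 0)).
rewrite -big_mkcond -big_filter /=.
apply: perm_big; apply: uniq_perm.
- exact: undup_uniq.
- by apply: filter_uniq; rewrite map_inj_uniq ?iota_uniq //; move=> x y [].
move=> z; rewrite mem_undup mem_filter.
case Hz: (z \in L) => //=.
apply/esym/mapP; exists (absz z); last by move: (HL z Hz); lia.
by rewrite mem_iota add0n; move: (HL z Hz); lia.
Qed.

Lemma xRF_neq0 : xRF != 0.
Proof. by rewrite /xRF tofrac_eq0 polyX_eq0. Qed.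

Lemma xRF_neq1 : xRF - 1 != 0.
Proof.
rewrite /xRF -tofrac1 -tofracB tofrac_eq0.
apply/eqP => /(congr1 (fun p : {poly rat} => p`_1)).
rewrite coefB coefX coef1 coef0 /= subr0 => /eqP; by rewrite oner_eq0.
Qed.

Lemma alg (F : fieldType) (x X S0 Sb : F) : x != 0 -> X != 0 -> x - 1 != 0 ->
  S0 + X * Sb - (X * x - 1) / (x - 1) =
  ((1 - x) * S0 + X * x) / (1 - x) + X * (((1 - x^-1) * Sb + (X * x)^-1) / (1 - x^-1)).
Proof.
move=> hx hX h1.
have h2 : 1 - x != 0 by rewrite -opprB oppr_eq0.
have h3 : 1 - x^-1 != 0.
  have -> : 1 - x^-1 = (x - 1) / x by field.
  by rewrite mulf_neq0 ?invr_eq0.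
field.
by rewrite hx h1 hX h2.
Qed.

Lemma Nval (b : nat) : (0 < b)%N -> (((b - 1) * (b - 2))%N)%:Z = (b%:Z - 1) * (b%:Z - 2).
Proof. case: b => [|[|b]] //. Qed.

Lemma alg2 (F : fieldType) (a b c : F) : b != 0 -> a * b * (c * b^-1) = c * a.
Proof. move=> hb; field. exact: hb. Qed.

Lemma exprzP (x : RF) (n : nat) : x ^ (n%:Z) = x ^+ n.
Proof. by []. Qed.

Lemma rev_sum (f : nat -> RF) M :
  xRF ^+ M * \sum_(m < M.+1) f m * xRF^-1 ^+ m = \sum_(n < M.+1) f (M - n)%N * xRF ^+ n.
Proof.
rewrite big_distrr (reindex_inj rev_ord_inj) /=; apply: eq_bigr => i _.
rewrite subSS exprVn -{1}(subnKC (_ : (i <= M)%N)) ?exprD ?alg2 //.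
  by rewrite expf_neq0 // xRF_neq0.
by rewrite -ltnS.
Qed.

Lemma bnd_aux (a : int) (h b : nat) : 0 <= a <= h%:Z * b%:Z -> 0 <= a < ((h*b)%N.+1)%:Z.
Proof. rewrite intS PoszM. lia. Qed.

Lemma En_aux (h b n : nat) : (n < (h * b).+1)%N -> (((h * b) - n)%N)%:Z = h%:Z * b%:Z - n%:Z.
Proof. by move=> Hn; rewrite subzn; last by rewrite -ltnS. Qed.

Theorem theorem5p1 (A : seq int) (b : nat) :
  0 \in A -> (forall a, a \in A -> 0 <= a) ->
  (b%:Z \in A) -> (forall a, a \in A -> a <= b%:Z) ->
  gcd_set A = 1 ->
  exists (p0 q0 pb qb : {poly rat}),
    expands (fun n => ind (inT A 0 n%:Z)) p0 q0 /\
    expands (fun n => ind (inT A b%:Z (- n%:Z))) pb qb /\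
    forall h : nat, (2 * b%:Z - 4 <= h%:Z) ->
      sigma_sumset A h =
        tofrac p0 / tofrac q0 + xRF ^+ (h * b)%N * (eval_inv pb / eval_inv qb).
Proof.
move=> A0 Age0 Ab Ale g1.
have b0 : (0 < b)%N := @hyp_b0 A b Age0 Ale g1.
have hA : hypB A b by split => // a Ha; rewrite Age0 ?Ale.
pose N := ((b - 1) * (b - 2))%N.
have HN : forall n : nat, (N <= n)%N -> (b%:Z - 1) * (b%:Z - 2) <= n%:Z.
  by move=> n Hn; rewrite -Nval //; rewrite lez_nat.
pose c0 := fun n : nat => ind (inT A 0 n%:Z).
pose cb := fun n : nat => ind (inT A b%:Z (- n%:Z)).
have Hc0 : forall n, (N <= n)%N -> c0 n = 1.
  move=> n Hn; rewrite /c0 /ind; case: excluded_middle_informative => // [] [].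
  by apply/inT0; exact: (@cb_in A b hA g1 _ (HN n Hn)).1.
have Hcb : forall n, (N <= n)%N -> cb n = 1.
  move=> n Hn; rewrite /cb /ind; case: excluded_middle_informative => // [] [].
  by apply/inTb; exact: (@cb_in A b hA g1 _ (HN n Hn)).2.
exists (pol N c0), qpol, (pol N cb), qpol.
split; first exact: expands_pol.
split; first exact: expands_pol.
move=> h hh.
set M := (h * b)%N.
have NM : (N <= M.+1)%N.
  have := @aux5 b h b0 hh; rewrite -Nval // -/N /M => H.
  by rewrite -ltnS -(ltz_nat); rewrite PoszM; lia.
have szp (c : nat -> rat) : (size (pol N c) <= M.+2)%N.
  by apply: leq_trans (size_poly _ _) _; rewrite ltnS.
have szq : (size qpol <= 2)%N by exact: size_poly.
rewrite (@tofrac_sum _ _ (szp c0)) (@pol_eval N c0 M.+1 xRF Hc0 NM).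
rewrite (@tofrac_sum _ _ szq) qpol_eval.
rewrite (@eval_inv_sum _ _ (szp cb)) (@pol_eval N cb M.+1 xRF^-1 Hcb NM).
rewrite (@eval_inv_sum _ _ szq) qpol_eval.
have E1 : xRF ^+ M.+1 = xRF ^+ M * xRF by rewrite exprSr.
have E2 : xRF^-1 ^+ M.+1 = (xRF ^+ M * xRF)^-1 by rewrite exprVn E1.
have XM0 : xRF ^+ M != 0 by rewrite expf_neq0 // xRF_neq0.
set S0 := \sum_(i < M.+1) _.
set Sb := \sum_(i < M.+1) _.
rewrite E1 E2 -(@alg _ xRF (xRF ^+ M) S0 Sb xRF_neq0 XM0 xRF_neq1).
have -> : (xRF ^+ M * xRF - 1) / (xRF - 1) = \sum_(i < M.+1) xRF ^+ i.
  by rewrite -E1 subrX1 mulrC mulKf; last exact: xRF_neq1.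
rewrite /Sb (rev_sum (fun m => phi (cb m)) M).
have hbnd : forall a, a \in sumset A h -> 0 <= a < (M.+1)%:Z.
  move=> a Ha; apply: bnd_aux; apply: (@sumset_bounds A b%:Z h a _ Ha).
  by move=> x Hx; rewrite Age0 ?Ale.
rewrite /sigma_sumset (@undup_sum (sumset A h) M.+1 (fun a => xRF ^ a) hbnd).
rewrite /S0 -big_split -sumrB /=.
apply: eq_bigr => [[n Hn]] _ /=.
rewrite exprzP.
have En : ((M - n)%N)%:Z = h%:Z * b%:Z - n%:Z by exact: En_aux.
rewrite /c0 /cb /ind.
case: excluded_middle_informative => P0; case: excluded_middle_informative => Pb;
  case: ifP => Hin.
- by rewrite phi1 !mul1r addrK.
- exfalso; move/negP: Hin; apply.
  apply: (@M2 A b h hA hh); first by apply/inT0.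
  by rewrite -En; apply/inTb.
- exfalso; apply: Pb; apply/inTb; rewrite En; exact: (@M1 A b h _ Hin).2.
- by rewrite phi1 phi0 mul1r mul0r addr0 subrr.
- exfalso; apply: P0; apply/inT0; exact: (@M1 A b h _ Hin).1.
- by rewrite phi1 phi0 mul1r mul0r add0r subrr.
- exfalso; apply: P0; apply/inT0; exact: (@M1 A b h _ Hin).1.
- exfalso; have := @M3 A b h hA g1 hh n _.
  rewrite -ltnS; move=> /(_ Hn) [/inT0|]; first exact: P0.
  by rewrite -En => /inTb.
Qed.
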